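(* Let $x_1,\dots,x_n\in\mathbb R^d$ be fixed points, and let $Y_1,\dots,Y_n$ be independent square-integrable real random variables with $\mathbf EY_i=m(x_i)$ ($i=1,\dots,n$) for some function $m:\mathbb R^d\to\mathbb R$. Let $\mathcal P_n$ be a finite set and, for each $p\in\mathcal P_n$, let $m_p:\mathbb R^d\to\mathbb R$ be a fixed (non-random) function. Let $p^*\in\mathcal P_n$ be any (random) index satisfying $$\frac1n\sum_{i=1}^n|m_{p^*}(x_i)-Y_i|^2=\min_{p\in\mathcal P_n}\frac1n\sum_{i=1}^n|m_p(x_i)-Y_i|^2.$$ Then there is an absolute constant $c_1$ (not depending on $n$, $\epsilon$, the points, or the distributions) such that for every $\epsilon>0$, $$\mathbf P\Big\{\frac1n\sum_{i=1}^n|m_{p^*}(x_i)-m(x_i)|^2>\epsilon+18\min_{p\in\mathcal P_n}\frac1n\sum_{i=1}^n|m_p(x_i)-m(x_i)|^2\Big\}\le c_1\cdot\max_{i=1,\dots,n}\mathbf EY_i^2\cdot\frac{|\mathcal P_n|}{\epsilon\, n}.$$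
   Context: $|\mathcal P_n|$ denotes the cardinality of the finite set $\mathcal P_n$. *)

(* Defs.v *)
From HB Require Import structures.
From mathcomp Require Import all_boot all_order all_algebra.
From mathcomp Require Import all_classical all_reals all_analysis.
Set Implicit Arguments. Unset Strict Implicit. Unset Printing Implicit Defensive.
Import Order.TTheory GRing.Theory Num.Theory.
Local Open Scope classical_set_scope.
Local Open Scope ring_scope.

Definition mutually_independent {d} {T : measurableType d} {R : realType}
  (P : probability T R) (n : nat) (Y : 'I_n -> T -> R) : Prop :=
  forall (S : {set 'I_n}) (B : 'I_n -> set R),
    (forall i, measurable (B i)) ->
    P (\bigcap_(i in [set i | i \in S]) (Y i @^-1` B i)) =
    (\prod_(i in S) P (Y i @^-1` B i))%E.

(* minimum of a real function over a finite type (0 if the type is empty) *)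
Definition finmin (I : finType) (R : realType) (F : I -> R) : R :=
  match [pick i : I] with
  | Some i0 => \big[Num.min/F i0]_(i : I) F i
  | None => 0
  end.

Definition emp_l2 (R : realType) (n : nat) (a : 'I_n -> R) (b : 'I_n -> R) : R :=
  (n%:R)^-1 * \sum_(i < n) `|a i - b i| ^+ 2.

(* Main.v *)
Require Import Defs.
From HB Require Import structures.
From mathcomp Require Import all_boot all_order all_algebra.
From mathcomp Require Import all_classical all_reals all_analysis.
From mathcomp Require Import measurable_realfun lebesgue_integral_fubini lebesgue_integrable lebesgue_integral_nonneg measure_function measurable_function random_variable.
From mathcomp Require Import ring lra.
Import Order.TTheory GRing.Theory Num.Theory.
Local Open Scope classical_set_scope.
Local Open Scope ring_scope.
Set Implicit Arguments. Unset Strict Implicit. Unset Printing Implicit Defensive.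
Section indep.
Local Open Scope ereal_scope.
Context d (T : measurableType d) (R : realType) (P : probability T R).
Variables X Y : {RV P >-> R}.
Hypothesis indXY : forall A B, measurable A -> measurable B ->
  P (X @^-1` A `&` Y @^-1` B) = P (X @^-1` A) * P (Y @^-1` B).
Hypotheses (X1 : (X : T -> R) \in Lfun P 1) (Y1 : (Y : T -> R) \in Lfun P 1)
  (XY1 : (X \* Y)%R \in Lfun P 1).

Definition phiXY (w : T) : R * R := (X w, Y w).
Lemma mphiXY : measurable_fun setT phiXY.
Proof. by apply/measurable_fun_pairP; split. Qed.
HB.instance Definition _ := isMeasurableFun.Build _ _ _ _ phiXY mphiXY.

Let muXY := distribution P phiXY.
Let muX := distribution P X.
Let muY := distribution P Y.
Let f (z : R * R) : \bar R := (z.1 * z.2)%:E.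
Let mf : measurable_fun setT f.
Proof. apply/measurable_EFinP; apply: measurable_funM => //. Qed.

Let prodE : forall A, measurable A -> (muX \x muY) A = muXY A.
Proof.
apply: product_measure_unique => A B mA mB /=.
rewrite /muXY /distribution /pushforward.
have -> : phiXY @^-1` (A `*` B) = X @^-1` A `&` Y @^-1` B by [].
exact: indXY.
Qed.

Let intP : P.-integrable setT (f \o phiXY).
Proof. by move/Lfun1_integrable: XY1. Qed.

Let int1 : muXY.-integrable setT f.
Proof.
have := @integrable_pushforward _ _ _ _ R phiXY mphiXY P setT f mf.
by rewrite preimage_setT; move/(_ intP measurableT).
Qed.

Let int2 : (muX \x muY).-integrable setT f.
Proof.
apply/integrableP; split => //.
move/integrableP: int1 => [_]; apply: le_lt_trans.
rewrite (eq_measure_integral muXY) // => A mA _; exact: prodE.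
Qed.

Lemma indep_expectation_mul : 'E_P[X \* Y] = 'E_P[X] * 'E_P[Y].
Proof.
have E1 : 'E_P[X \* Y] = \int[muX \x muY]_z f z.
  rewrite (eq_measure_integral muXY); last by move=> A mA _; exact: prodE.
  rewrite integral_pushforward // preimage_setT unlock //.
rewrite E1 -integral12_prod_meas1 //.
have intY : muY.-integrable setT (EFin \o id).
  apply: integrable_pushforward => //; first exact/measurable_EFinP.
  by rewrite preimage_setT; move/Lfun1_integrable: Y1.
have intX : muX.-integrable setT (EFin \o id).
  apply: integrable_pushforward => //; first exact/measurable_EFinP.
  by rewrite preimage_setT; move/Lfun1_integrable: X1.
have EY : 'E_P[Y] = \int[muY]_y y%:E.
  by rewrite unlock integral_distribution //; move/Lfun1_integrable: Y1.
have EX : 'E_P[X] = \int[muX]_y y%:E.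
  by rewrite unlock integral_distribution //; move/Lfun1_integrable: X1.
rewrite /fubini_F /f /=.
under eq_integral => x _.
  under eq_integral => y _ do rewrite EFinM.
  rewrite integralZl //.
  over.
rewrite /= -EY -(fineK (expectation_fin_num Y1)) integralZr //.
by rewrite EX.
Qed.
End indep.
Section H.
Context d (T : measurableType d) (R : realType) (P : probability T R).

Lemma mi_pair n (Y : 'I_n -> T -> R) (i j : 'I_n) (A B : set R) :
  mutually_independent P Y -> i != j -> measurable A -> measurable B ->
  P (Y i @^-1` A `&` Y j @^-1` B) = (P (Y i @^-1` A) * P (Y j @^-1` B))%E.
Proof.
move=> hI ij mA mB.
pose BB := fun k : 'I_n => if k == i then A else if k == j then B else setT.
have mBB : forall k, measurable (BB k).
  by move=> k; rewrite /BB; case: ifP => // _; case: ifP.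
have := hI [set i; j]%SET BB mBB.
have -> : \bigcap_(k in [set k | k \in [set i; j]%SET]) (Y k @^-1` BB k) =
   Y i @^-1` A `&` Y j @^-1` B.
  apply/seteqP; split => w.
    move=> h; split.
      by have := h i; rewrite /BB eqxx; apply; rewrite /= !inE eqxx.
    by have := h j; rewrite /BB eq_sym (negbTE ij) eqxx; apply; rewrite /= !inE eqxx orbT.
  move=> [hi hj] k /=; rewrite !inE => /orP[] /eqP ->.
    by rewrite /BB eqxx.
  by rewrite /BB eq_sym (negbTE ij) eqxx.
move=> ->.
rewrite big_setU1 /=; last by rewrite inE.
rewrite big_set1 /BB eqxx eq_sym (negbTE ij) eqxx.
by [].
Qed.
End H.

Section cov.
Context d (T : measurableType d) (R : realType) (P : probability T R).
Lemma cov_indep0 n (Y : 'I_n -> {RV P >-> R}) i j :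
  mutually_independent P (fun i => (Y i : T -> R)) ->
  (forall i, (Y i : T -> R) \in Lfun P 2%:E) -> i != j ->
  covariance P (Y i) (Y j) = 0%E.
Proof.
move=> hI hL ij.
have Pfin : P setT \is a fin_num := fin_num_measure P _ measurableT.
have L1 k := Lfun_subset12 Pfin (hL k).
rewrite covarianceE //; last exact: Lfun2_mul_Lfun1.
rewrite (@indep_expectation_mul _ _ _ P (Y i) (Y j)) //.
- by rewrite subee // fin_numM // expectation_fin_num.
- by move=> A B mA mB; apply: (mi_pair (Y := fun k => (Y k : T -> R))).
- exact: Lfun2_mul_Lfun1.
Qed.
End cov.

Section moment.
Context d (T : measurableType d) (R : realType) (P : probability T R).
Local Open Scope ereal_scope.

Lemma Lfun1_bigsum (I : Type) (r : seq I) (h : I -> T -> R) :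
  (forall i, h i \in Lfun P 1) -> (fun w => \sum_(i <- r) h i w)%R \in Lfun P 1.
Proof.
move=> hL; elim: r => [|x r IH].
  have -> : (fun w => \sum_(i <- [::]) h i w)%R = cst 0%R.
    by apply/funext => w; rewrite big_nil.
  exact: Lfun_cst.
have -> : (fun w => \sum_(i <- x :: r) h i w)%R = (h x \+ (fun w => \sum_(i <- r) h i w))%R.
  by apply/funext => w; rewrite big_cons.
exact: rpredD.
Qed.

Lemma E_bigsum (I : Type) (r : seq I) (h : I -> T -> R) :
  (forall i, h i \in Lfun P 1) ->
  'E_P[fun w => (\sum_(i <- r) h i w)%R] = \sum_(i <- r) 'E_P[h i].
Proof.
move=> hL; elim: r => [|x r IH].
  have -> : (fun w => \sum_(i <- [::]) h i w)%R = cst 0%R.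
    by apply/funext => w; rewrite big_nil.
  by rewrite expectation_cst big_nil.
have -> : (fun w => \sum_(i <- x :: r) h i w)%R = (h x \+ (fun w => \sum_(i <- r) h i w))%R.
  by apply/funext => w; rewrite big_cons.
by rewrite expectationD // ?IH ?big_cons //; exact: Lfun1_bigsum.
Qed.

Lemma second_moment n (Y : 'I_n -> {RV P >-> R}) (a : 'I_n -> R) (M : R) :
  mutually_independent P (fun i => (Y i : T -> R)) ->
  (forall i, (Y i : T -> R) \in Lfun P 2%:E) ->
  (forall i, 'E_P[((Y i : T -> R) ^+ 2)%R] <= M%:E) ->
  'E_P[fun w => ((\sum_i a i * (Y i w - fine 'E_P[Y i])) ^+ 2)%R]
    <= (M * \sum_i a i ^+ 2)%:E.
Proof.
move=> hI hL hM.
have Pfin : P setT \is a fin_num := fin_num_measure P _ measurableT.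
pose W i := ((Y i : T -> R) \- cst (fine 'E_P[Y i]))%R.
have WL i : W i \in Lfun P 2%:E.
  apply: rpredB => //; last by move=> ?; exact: Lfun_cst.
  by rewrite lee1n.
pose h i j := ((a i * a j) \o* (W i \* W j))%R.
have hL1 i j : h i j \in Lfun P 1.
  by apply: Lfun_scale => //; exact: Lfun2_mul_Lfun1.
have -> : (fun w => ((\sum_i a i * (Y i w - fine 'E_P[Y i])) ^+ 2)%R) =
    (fun w => \sum_(i <- index_enum 'I_n) (fun w => \sum_(j <- index_enum 'I_n) h i j w) w)%R.
  apply/funext => w; rewrite expr2 mulr_suml; apply: eq_bigr => i _.
  rewrite mulr_sumr; apply: eq_bigr => j _.
  by rewrite /h /W /=; ring.
rewrite E_bigsum; last by move=> i; exact: Lfun1_bigsum.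
have Eh i j : 'E_P[h i j] = (a i * a j)%:E * covariance P (Y i) (Y j).
  by rewrite expectationZl ?Lfun2_mul_Lfun1 // covariance.unlock.
under eq_bigr => i _.
  rewrite E_bigsum //.
  under eq_bigr => j _ do rewrite Eh.
  rewrite (bigD1 i) //= big1 ?adde0; last first.
    by move=> j ji; rewrite cov_indep0 ?mule0 // eq_sym.
  over.
rewrite /= mulr_sumr -sumEFin.
apply: lee_sum => i _.
have -> : (M * a i ^+ 2)%:E = (a i * a i)%:E * M%:E by rewrite -EFinM expr2 mulrC.
apply: lee_wpmul2l; first by rewrite lee_fin sqr_ge0.
have Pf : P setT \is a fin_num := fin_num_measure P _ measurableT.
rewrite -/(variance P (Y i)) varianceE //.
have Y1 := Lfun_subset12 Pf (hL i).
rewrite leeBlDr; last by rewrite fin_numX // expectation_fin_num.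
by apply: lee_paddr => //; exact: sqre_ge0.
Qed.
End moment.

Section markov2.
Context d (T : measurableType d) (R : realType) (P : probability T R).
Local Open Scope ereal_scope.
Lemma markov_lt (g : T -> R) (c : R) : measurable_fun setT g ->
  (forall w, (0 <= g w)%R) -> (0 < c)%R ->
  c%:E * P [set w | (c < g w)%R] <= 'E_P[g].
Proof.
move=> mg g0 c0.
set E := [set w | (c < g w)%R].
have mE : measurable E.
  have -> : E = g @^-1` `]c, +oo[%classic.
    by apply/seteqP; split => w /=; rewrite in_itv /= andbT.
  by rewrite -[X in measurable X]setTI; apply: mg.
have -> : P E = \int[P]_w (\1_E w)%:E.
  by rewrite integral_indic // setIT.
rewrite -(@integralZl_indic _ _ _ P setT measurableT (fun _ => E)) //; last first.
  by rewrite ltNge (ltW c0).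
rewrite unlock; apply: ge0_le_integral => //.
- by move=> x _; rewrite lee_fin indicE; apply: mulr_ge0; [exact: ltW|exact: ler0n].
- apply/measurable_EFinP; apply: measurable_funM => //.
- exact/measurable_EFinP.
- move=> x _; rewrite lee_fin indicE.
  by case: (boolP (x \in E)) => [|_]; rewrite ?mulr1 ?mulr0 // inE => /ltW.
Qed.
End markov2.

Section detlem.
Context (R : realType).
Lemma finmin_le (I : finType) (F : I -> R) p : finmin F <= F p.
Proof.
rewrite /finmin; case: pickP => [i0 _|h]; first exact: bigmin_le.
by have := h p.
Qed.

Lemma finmin_arg (I : finType) (F : I -> R) (p : I) : exists q, F q <= finmin F.
Proof.
rewrite /finmin; case: pickP => [i0 _|h]; last by have := h p.
exists [arg min_(i < i0) F i]%O; case: arg_minP => // q _ hq.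
by apply/bigmin_geP; split => [|i _]; exact: hq.
Qed.

Lemma emp_expand n (u y c : 'I_n -> R) : (0 < n)%N ->
  n%:R * emp_l2 u y = \sum_i (u i - c i) ^+ 2
     - 2 * \sum_i (u i - c i) * (y i - c i) + \sum_i (y i - c i) ^+ 2.
Proof.
move=> n0; rewrite /emp_l2 mulrA mulfV ?pnatr_eq0 -?lt0n // mul1r.
rewrite mulr_sumr -sumrN -!big_split /=; apply: eq_bigr => i _.
rewrite real_normK ?num_real //; ring.
Qed.

Lemma emp_m n (u c : 'I_n -> R) : (0 < n)%N ->
  n%:R * emp_l2 u c = \sum_i (u i - c i) ^+ 2.
Proof.
move=> n0; rewrite /emp_l2 mulrA mulfV ?pnatr_eq0 -?lt0n // mul1r.
by apply: eq_bigr => i _; rewrite real_normK ?num_real.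
Qed.

Lemma key_ineq (a b s t dl : R) : 0 <= a -> 0 <= b -> 0 <= dl ->
  s ^+ 2 <= dl * a -> t ^+ 2 <= dl * b -> a - 2 * s <= b - 2 * t ->
  a <= 6 * dl + 4 * b.
Proof.
move=> a0 b0 d0 hs ht hm.
have h1 : 2 * s <= a / 2 + 2 * dl.
  rewrite leNgt; apply/negP => h.
  have h0 : 0 <= a / 2 + 2 * dl by rewrite addr_ge0 ?mulr_ge0 ?divr_ge0.
  have hsq : (a / 2 + 2 * dl) * (a / 2 + 2 * dl) < (2 * s) * (2 * s).
    apply: (le_lt_trans (y := (a / 2 + 2 * dl) * (2 * s))).
      by apply: ler_wpM2l => //; exact: ltW.
    by rewrite ltr_pM2r // (le_lt_trans h0).
  have e : 0 <= (a / 2 - 2 * dl) ^+ 2 := sqr_ge0 _.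
  nra.
have h2 : - (2 * t) <= b + dl.
  rewrite leNgt; apply/negP => h.
  have h0 : 0 <= b + dl by rewrite addr_ge0.
  have hsq : (b + dl) * (b + dl) < (2 * t) * (2 * t).
    have -> : (2 * t) * (2 * t) = (- (2 * t)) * (- (2 * t)) by rewrite mulrNN.
    apply: (le_lt_trans (y := (b + dl) * (- (2 * t)))).
      by apply: ler_wpM2l => //; exact: ltW.
    by rewrite ltr_pM2r // (le_lt_trans h0).
  have e : 0 <= (b - dl) ^+ 2 := sqr_ge0 _.
  nra.
lra.
Qed.
End detlem.

Unset Implicit Arguments.
Theorem lemma6p1 (R : realType) :
  exists c1 : R, forall (dd : nat) (n : nat) (x : 'I_n -> 'rV[R]_dd)
    (d : measure_display) (T : measurableType d) (P : probability T R)
    (Y : 'I_n -> {RV P >-> R}) (m : 'rV[R]_dd -> R)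
    (Pn : finType) (mp : Pn -> 'rV[R]_dd -> R) (pstar : T -> Pn) (eps : R),
    mutually_independent P (fun i => (Y i : T -> R)) ->
    (forall i, (Y i : T -> R) \in Lfun P 2%:E) ->
    (forall i, ('E_P[Y i])%E = (m (x i))%:E) ->
    (forall p : Pn, measurable (pstar @^-1` [set p])) ->
    (forall w, emp_l2 (fun i => mp (pstar w) (x i)) (fun i => Y i w)
               = finmin (fun p => emp_l2 (fun i => mp p (x i)) (fun i => Y i w))) ->
    0 < eps ->
    (P [set w | emp_l2 (fun i => mp (pstar w) (x i)) (fun i => m (x i))
               > eps + 18 * finmin (fun p => emp_l2 (fun i => mp p (x i)) (fun i => m (x i)))]%R
     <= c1%:E * (\big[maxe/0%E]_(i < n) 'E_P[((Y i : T -> R) ^+ 2)%R])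
        * ((#|Pn|)%:R / (eps * n%:R))%R%:E)%E.
Proof.
exists 6 => dd n x d T P Y m Pn mp pstar eps hI hL hE hps hmin eps0.
have [n0|n0] := posnP n.
  have nR : (n%:R : R) = 0 by rewrite n0.
  have -> : [set w | emp_l2 (fun i => mp (pstar w) (x i)) (fun i => m (x i))
               > eps + 18 * finmin (fun p => emp_l2 (fun i => mp p (x i)) (fun i => m (x i)))]%R = set0.
    apply/seteqP; split => // w /=.
    have e0 : forall (u v : 'I_n -> R), emp_l2 u v = 0 by move=> u v; rewrite /emp_l2 nR invr0 mul0r.
    rewrite e0.
    have -> : (fun p => emp_l2 (fun i => mp p (x i)) (fun i => m (x i))) = (fun _ : Pn => (0:R)).
      by apply/funext => p; exact: e0.
    have -> : finmin (fun _ : Pn => (0:R)) = 0.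
      rewrite /finmin; case: pickP => // i0 _.
      by elim/big_rec: _ => // i y _ ->; rewrite minxx.
    by rewrite mulr0 addr0 ltNge (ltW eps0).
  by rewrite measure0 nR mulr0 invr0 mulr0 mule0.
set Fm := (fun p => emp_l2 (fun i => mp p (x i)) (fun i => m (x i))).
have hc i : fine ('E_P[Y i])%E = m (x i) by rewrite hE.
have Pfin : P setT \is a fin_num := fin_num_measure P _ measurableT.
have hY2 i : ('E_P[((Y i : T -> R) ^+ 2)%R])%E \is a fin_num.
  apply: expectation_fin_num.
  have -> : ((Y i : T -> R) ^+ 2)%R = (Y i \* Y i)%R by rewrite expr2.
  exact: Lfun2_mul_Lfun1.
set Mx := \big[maxe/0%E]_(i < n) _.
have Mx0 : (0 <= Mx)%E.
  rewrite /Mx; elim/big_ind: _ => //.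
    by move=> a b ha hb; rewrite le_max ha.
  by move=> i _; apply: expectation_ge0 => w; rewrite expr2 /= -expr2; exact: sqr_ge0.
have Mxfin : Mx \is a fin_num.
  rewrite /Mx; elim/big_ind: _ => //.
  by move=> a b ha hb; rewrite maxEle; case: ifP.
set M := fine Mx.
have MxE : Mx = M%:E by rewrite fineK.
have M0 : 0 <= M by rewrite -lee_fin -MxE.
have hM i : ('E_P[((Y i : T -> R) ^+ 2)%R] <= M%:E)%E.
  by rewrite -MxE /Mx; exact: le_bigmax.
pose g p i := mp p (x i) - m (x i).
pose A p := \sum_i g p i ^+ 2.
pose S p w := \sum_i g p i * (Y i w - m (x i)).
pose dl := eps * n%:R / 6.
have dl0 : 0 < dl by rewrite /dl divr_gt0 // mulr_gt0 // ltr0n.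
pose E_ p := [set w | dl * A p < S p w ^+ 2].
have A0 p : 0 <= A p by rewrite /A sumr_ge0 // => i _; exact: sqr_ge0.
have hS p : ('E_P[fun w => (S p w ^+ 2)%R] <= (M * A p)%:E)%E.
  have -> : (fun w => S p w ^+ 2) =
     (fun w => (\sum_i g p i * (Y i w - fine ('E_P[Y i])%E)) ^+ 2).
    by apply/funext => w; rewrite /S; congr (_ ^+ 2); apply: eq_bigr => i _; rewrite hc.
  exact: second_moment.
have mS p : measurable_fun setT (S p).
  apply: measurable_sum => i.
  apply: measurable_funM => //.
  exact: measurable_funB.
have mS2 p : measurable_fun setT (fun w => S p w ^+ 2) by exact: measurable_funX.
have mE p : measurable (E_ p).
  have -> : E_ p = (fun w => S p w ^+ 2) @^-1` `]dl * A p, +oo[%classic.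
    by apply/seteqP; split => w /=; rewrite in_itv /= andbT.
  by rewrite -[X in measurable X]setTI; apply: mS2.
have en0 : (0 : R) < n%:R by rewrite ltr0n.
have PE p : (P (E_ p) <= (6 * M / (eps * n%:R))%:E)%E.
  have K0 : 0 <= 6 * M / (eps * n%:R).
    by rewrite divr_ge0 ?mulr_ge0 // ltW // mulr_gt0.
  have [Az|Ap] := eqVneq (A p) 0.
    have gz i : g p i = 0.
      have := psumr_eq0P (P := predT) (F := fun i => g p i ^+ 2) _ Az.
      by move=> /(_ (fun i _ => sqr_ge0 _) i isT) /eqP; rewrite sqrf_eq0 => /eqP.
    have -> : E_ p = set0.
      apply/seteqP; split => // w /=.
      rewrite /E_ /=.
      have -> : S p w = 0 by rewrite /S big1 // => i _; rewrite gz mul0r.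
      by rewrite Az mulr0 expr0n /= ltxx.
    by rewrite measure0 lee_fin.
  have Apos : 0 < A p by rewrite lt_neqAle eq_sym Ap A0.
  have hk := @markov_lt _ _ _ P _ _ (mS2 p) (fun w => sqr_ge0 (S p w)) (mulr_gt0 dl0 Apos).
  have hk2 := le_trans hk (hS p).
  have PEf : P (E_ p) \is a fin_num := fin_num_measure P _ (mE p).
  rewrite -(fineK PEf) lee_fin.
  move: hk2; rewrite -(fineK PEf) -EFinM lee_fin => hk2.
  rewrite -(ler_pM2l (mulr_gt0 dl0 Apos)).
  apply: (le_trans hk2).
  have -> : dl * A p * (6 * M / (eps * n%:R)) = M * A p.
    rewrite /dl; field.
    by rewrite (gt_eqF eps0) (gt_eqF en0).
  by [].
set Ev := [set w | _].
have incl : Ev `<=` \bigcup_(p in setT) E_ p.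
  move=> w /= hw.
  case: (pselect (exists p, E_ p w)) => [[p hp]|hno]; first by exists p.
  exfalso.
  have hle p : S p w ^+ 2 <= dl * A p.
    by rewrite leNgt; apply/negP => h; apply: hno; exists p.
  set ps := pstar w.
  have [q hq] := finmin_arg Fm ps.
  have hYle : emp_l2 (fun i => mp ps (x i)) (fun i => Y i w)
           <= emp_l2 (fun i => mp q (x i)) (fun i => Y i w).
    by rewrite hmin; exact: (finmin_le (fun p => emp_l2 (fun i => mp p (x i)) (fun i => Y i w))).
  have hYle2 := hYle; rewrite -(ler_pM2l en0) in hYle2.
  have e1 : n%:R * emp_l2 (fun i => mp ps (x i)) (fun i => Y i w) =
      A ps - 2 * S ps w + \sum_i (Y i w - m (x i)) ^+ 2.
    exact: (@emp_expand R n _ _ (fun i => m (x i)) n0).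
  have e2 : n%:R * emp_l2 (fun i => mp q (x i)) (fun i => Y i w) =
      A q - 2 * S q w + \sum_i (Y i w - m (x i)) ^+ 2.
    exact: (@emp_expand R n _ _ (fun i => m (x i)) n0).
  rewrite e1 e2 lerD2r in hYle2.
  have key := key_ineq (A0 ps) (A0 q) (ltW dl0) (hle ps) (hle q) hYle2.
  have em1 : n%:R * Fm ps = A ps by exact: emp_m.
  have em2 : n%:R * Fm q = A q by exact: emp_m.
  have h1 : n%:R * (eps + 18 * finmin Fm) < n%:R * Fm ps by rewrite ltr_pM2l.
  have h2 : n%:R * Fm q <= n%:R * finmin Fm by rewrite ler_pM2l.
  have e6 : 6 * dl = eps * n%:R by rewrite /dl; field.
  have Aq0 := A0 q.
  nra.
have mEv : measurable Ev.
  have EvE : Ev = \bigcup_(p in [set p | eps + 18 * finmin Fm < Fm p]) pstar @^-1` [set p].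
    apply/seteqP; split => w /=.
      by move=> hw; exists (pstar w).
    by move=> [p /= hp hpw]; rewrite /Ev /= hpw.
  rewrite EvE; apply: fin_bigcup_measurable => //; exact: finite_finset.
apply: (le_trans (content_sub_fsum P (D := setT) (A_ := E_) finite_finset (fun p _ => mE p) mEv incl)).
rewrite (fsbigE (enum Pn)) ?enum_uniq //; last by move=> i _; rewrite mem_enum.
have hs : (\sum_(i <- enum Pn | i \in [set: Pn]) P (E_ i) <=
    \sum_(i <- enum Pn | i \in [set: Pn]) (6 * M / (eps * n%:R))%:E)%E.
  by apply: lee_sum => p _; exact: PE.
apply: (le_trans hs).
rewrite sumEFin MxE -!EFinM lee_fin.
under eq_bigl => p do rewrite in_setT.
rewrite big_enum /= sumr_const -mulr_natr.
rewrite le_eqVlt; apply/orP; left; apply/eqP; field; by rewrite (gt_eqF eps0) (gt_eqF en0).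
Qed.
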